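(* Let $f:G\to H$ be a locally sectionable group homomorphism. Then $\sigma(H)\leq \mathrm{sec}(f)\leq \sigma_c(H)$. In particular, if $\sigma(H)=\sigma_c(H)$, then $\mathrm{sec}(f)=\sigma_c(H)=\sigma(H)$.
   Context: For a homomorphism $f:G\to H$ and a subgroup $L\le H$, a local section of $f$ on $L$ is a homomorphism $s:L\to G$ with $f\circ s=\mathrm{incl}_L$ (the inclusion $L\hookrightarrow H$). $f$ is locally sectionable if for every $b\in H$, $b\neq 1$, there is a subgroup $L\le H$ containing $b$ on which $f$ admits a local section. The sectional number $\mathrm{sec}(f)$ is the least positive integer $m$ such that there exist proper subgroups $H_1,\ldots,H_m$ of $H$ with $H=H_1\cup\cdots\cup H_m$ and such that $f$ admits a local section on each $H_i$; $\mathrm{sec}(f)=\infty$ if no such $m$ exists. The covering number $\sigma(H)$ is the least positive integer $m$ such that $H$ is a union of $m$ proper subgroups, and the cyclic covering number $\sigma_c(H)$ is the least positive integer $m$ such that $H$ is a union of $m$ cyclic proper subgroups (each being $\infty$ if no such $m$ exists). *)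

(* Defs.v *)
From Stdlib Require Import ZArith Arith ClassicalEpsilon.

Record Group := MkGroup {
  gcar :> Type;
  gmul : gcar -> gcar -> gcar;
  gone : gcar;
  ginv : gcar -> gcar;
  gmulA : forall x y z, gmul x (gmul y z) = gmul (gmul x y) z;
  gmul1g : forall x, gmul gone x = x;
  gmulg1 : forall x, gmul x gone = x;
  gmulVg : forall x, gmul (ginv x) x = gone;
  gmulgV : forall x, gmul x (ginv x) = gone
}.

Arguments gmul {g}.
Arguments gone {g}.
Arguments ginv {g}.

Definition is_hom {G H : Group} (f : G -> H) : Prop :=
  forall x y : G, f (gmul x y) = gmul (f x) (f y).

Definition is_subgroup {H : Group} (L : H -> Prop) : Prop :=
  L gone /\ (forall x y, L x -> L y -> L (gmul x y)) /\ (forall x, L x -> L (ginv x)).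

Definition is_proper {H : Group} (L : H -> Prop) : Prop := exists x : H, ~ L x.

Fixpoint npow {H : Group} (g : H) (n : nat) : H :=
  match n with O => gone | S n' => gmul g (npow g n') end.

Definition zpow {H : Group} (g : H) (z : Z) : H :=
  match z with
  | Z0 => gone
  | Zpos p => npow g (Pos.to_nat p)
  | Zneg p => ginv (npow g (Pos.to_nat p))
  end.

Definition is_cyclic_sub {H : Group} (L : H -> Prop) : Prop :=
  exists g : H, forall x, L x <-> exists z : Z, x = zpow g z.

(* a local section of f on L: a homomorphism s : L -> G with f (s x) = x on L.
   It is represented by a function H -> G whose values outside L are irrelevant. *)
Definition local_section {G H : Group} (f : G -> H) (L : H -> Prop) (s : H -> G) : Prop :=
  (forall x y, L x -> L y -> s (gmul x y) = gmul (s x) (s y)) /\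
  (forall x, L x -> f (s x) = x).

Definition has_local_section {G H : Group} (f : G -> H) (L : H -> Prop) : Prop :=
  exists s : H -> G, local_section f L s.

Definition locally_sectionable {G H : Group} (f : G -> H) : Prop :=
  forall b : H, b <> gone ->
    exists L : H -> Prop, is_subgroup L /\ L b /\ has_local_section f L.

Definition covered_by {H : Group} (P : (H -> Prop) -> Prop) (m : nat) : Prop :=
  exists Hs : nat -> (H -> Prop),
    (forall i, i < m -> is_subgroup (Hs i) /\ is_proper (Hs i) /\ P (Hs i)) /\
    (forall x : H, exists i, i < m /\ Hs i x).

(* extended naturals: None = infinity *)
Definition enat := option nat.

Definition ele (a b : enat) : Prop :=
  match a, b with
  | _, None => True
  | None, Some _ => False
  | Some m, Some n => m <= n
  end.

Definition is_least_pos (Q : nat -> Prop) (o : enat) : Prop :=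
  match o with
  | Some m => 0 < m /\ Q m /\ (forall k, 0 < k -> Q k -> m <= k)
  | None => forall k, 0 < k -> ~ Q k
  end.

Definition least_pos (Q : nat -> Prop) : enat :=
  epsilon (inhabits None) (is_least_pos Q).

Definition sigma_cov (H : Group) : enat :=
  least_pos (covered_by (H := H) (fun _ => True)).

Definition sigma_c (H : Group) : enat :=
  least_pos (covered_by (H := H) is_cyclic_sub).

Definition sec_num {G H : Group} (f : G -> H) : enat :=
  least_pos (covered_by (H := H) (has_local_section f)).

(* Main.v *)
Require Import Defs.
From Stdlib Require Import ZArith Arith Lia Classical ClassicalEpsilon.

Lemma least_exists (Q : nat -> Prop) : exists o, is_least_pos Q o.
Proof.
  destruct (classic (exists k, 0 < k /\ Q k)) as [[n [Hn Qn]]|Hno].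
  - revert Hn Qn. induction n as [n IH] using (well_founded_induction lt_wf).
    intros Hn Qn.
    destruct (classic (exists k, k < n /\ 0 < k /\ Q k)) as [[k [Hk [Hk0 Qk]]]|Hs].
    + exact (IH k Hk Hk0 Qk).
    + exists (Some n). simpl. split; [exact Hn|split; [exact Qn|]].
      intros k Hk Qk. destruct (Nat.lt_ge_cases k n) as [Hl|Hl]; [|exact Hl].
      exfalso; apply Hs; eauto.
  - exists None. simpl. intros k Hk Qk. apply Hno; eauto.
Qed.

Lemma least_spec (Q : nat -> Prop) : is_least_pos Q (least_pos Q).
Proof.
  unfold least_pos. apply epsilon_spec. apply least_exists.
Qed.

Lemma least_mono (Q Q' : nat -> Prop) :
  (forall k, Q k -> Q' k) -> ele (least_pos Q') (least_pos Q).
Proof.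
  intros HQ. pose proof (least_spec Q) as S. pose proof (least_spec Q') as S'.
  destruct (least_pos Q) as [m|] eqn:E; destruct (least_pos Q') as [m'|] eqn:E'; simpl in *; auto.
  - destruct S as [H0 [Hm _]]. destruct S' as [_ [_ Hmin]]. apply Hmin; auto.
  - destruct S as [H0 [Hm _]]. exact (S' m H0 (HQ m Hm)).
Qed.

Lemma covered_mono {H : Group} (P P' : (H -> Prop) -> Prop) m :
  (forall L, is_subgroup L -> is_proper L -> P L -> P' L) ->
  covered_by P m -> covered_by P' m.
Proof.
  intros HP [Hs [H1 H2]]. exists Hs. split; [|exact H2].
  intros i Hi. destruct (H1 i Hi) as [A [B C]]. auto.
Qed.

Lemma npow_in {H : Group} (L : H -> Prop) g n :
  is_subgroup L -> L g -> L (npow g n).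
Proof.
  intros [H1 [H2 H3]] Hg. induction n; simpl; auto.
Qed.

Lemma zpow_in {H : Group} (L : H -> Prop) g z :
  is_subgroup L -> L g -> L (zpow g z).
Proof.
  intros HL Hg. destruct z; simpl.
  - destruct HL; auto.
  - apply npow_in; auto.
  - destruct HL as [A [B C]]. apply C. apply npow_in; [split; auto|auto].
Qed.

Lemma npow_one {H : Group} n : npow (gone (g:=H)) n = gone.
Proof. induction n; simpl; auto. rewrite IHn. apply gmul1g. Qed.

Lemma inv_one {H : Group} : ginv (gone (g:=H)) = gone.
Proof. rewrite <- (gmulg1 H (ginv gone)). apply gmulVg. Qed.

Lemma zpow_one {H : Group} z : zpow (gone (g:=H)) z = gone.
Proof. destruct z; simpl; rewrite ?npow_one, ?inv_one; auto. Qed.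

Lemma hom_one {G H : Group} (f : G -> H) : is_hom f -> f gone = gone.
Proof.
  intros Hf. assert (E : f gone = gmul (f gone) (f gone)).
  { rewrite <- Hf. rewrite gmul1g. reflexivity. }
  rewrite <- (gmulVg H (f gone)). rewrite E at 3. rewrite gmulA.
  rewrite gmulVg. rewrite gmul1g. reflexivity.
Qed.

Lemma cyclic_section {G H : Group} (f : G -> H) L :
  is_hom f -> locally_sectionable f -> is_cyclic_sub L -> has_local_section f L.
Proof.
  intros Hf Hls [g Hg].
  destruct (classic (g = gone)) as [E|Ne].
  - subst g. exists (fun _ => gone). split.
    + intros. symmetry. apply gmul1g.
    + intros x Hx. apply Hg in Hx. destruct Hx as [z ->].
      rewrite zpow_one. apply hom_one; auto.
  - destruct (Hls g Ne) as [L' [HL' [Hg' [s [S1 S2]]]]].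
    assert (Sub : forall x, L x -> L' x).
    { intros x Hx. apply Hg in Hx. destruct Hx as [z ->]. apply zpow_in; auto. }
    exists s. split; auto.
Qed.

Theorem corollary2p21 (G H : Group) (f : G -> H) :
  is_hom f -> locally_sectionable f ->
  ele (sigma_cov H) (sec_num f) /\ ele (sec_num f) (sigma_c H) /\
  (sigma_cov H = sigma_c H -> sec_num f = sigma_c H /\ sigma_c H = sigma_cov H).
Proof.
  intros Hf Hls.
  assert (A : ele (sigma_cov H) (sec_num f)).
  { apply least_mono. intros k. apply covered_mono. auto. }
  assert (B : ele (sec_num f) (sigma_c H)).
  { apply least_mono. intros k. apply covered_mono.
    intros L _ _ HL. apply cyclic_section; auto. }
  split; [exact A|split; [exact B|]].
  intros E. split; [|symmetry; exact E].
  rewrite E in A.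
  destruct (sec_num f) as [a|]; destruct (sigma_c H) as [b|]; simpl in *;
    try contradiction; auto.
  f_equal. lia.
Qed.
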